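(* Let $\mathcal{A}$ be a subring of the algebraic integers (not necessarily closed under complex conjugation). Let $\{\mathcal{W}_i\}_{i=1}^n$ be an equichordal tight fusion frame consisting of $n$ subspaces of dimension $m$ of $\mathbb{F}^k$ ($\mathbb{F}=\mathbb{R}$ or $\mathbb{C}$), with associated orthogonal projections $\{P_i\}_{i=1}^n$. If for all $i\in[n]$ the entries of $kP_i$ lie in $\mathcal{A}$, then \[ \frac{km(mn-k)}{n-1}\in\mathbb{Z}. \]
   Context: The algebraic integers are the complex roots of monic polynomials with integer coefficients. A collection of $m$-dimensional subspaces $\{\mathcal{W}_i\}_{i=1}^n$ of $\mathbb{F}^k$ with orthogonal projections $P_i$ is a tight fusion frame if $\sum_{i=1}^nP_i=AI_k$ for some $A>0$, and equichordal if $\operatorname{trace}(P_iP_j)$ is the same for all $i\neq j$. *)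

(* Defs.v *)
From mathcomp Require Import all_boot all_order all_algebra.
From mathcomp Require Import algC algnum.
Set Implicit Arguments. Unset Strict Implicit. Unset Printing Implicit Defensive.
Import Order.TTheory GRing.Theory Num.Theory.
Local Open Scope ring_scope.

Definition adjmx (k : nat) (A : 'M[algC]_k) : 'M[algC]_k := map_mx Num.conj A^T.

Definition is_orth_proj (k m : nat) (P : 'M[algC]_k) : Prop :=
  P *m P = P /\ adjmx P = P /\ \rank P = m.

Definition tight_fusion_frame (n k : nat) (P : 'I_n -> 'M[algC]_k) : Prop :=
  exists A : algC, 0 < A /\ \sum_(i < n) P i = A%:M.

Definition equichordal (n k : nat) (P : 'I_n -> 'M[algC]_k) : Prop :=
  exists c : algC, forall i j : 'I_n, i != j -> \tr (P i *m P j) = c.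

(* Main.v *)
Require Import Defs.
From mathcomp Require Import all_boot all_order all_algebra.
From mathcomp Require Import algC algnum.
From mathcomp Require Import ring.
Import Order.TTheory GRing.Theory Num.Theory.
Local Open Scope ring_scope.

Lemma tr_idem (F : fieldType) k (A : 'M[F]_k) :
  A *m A = A -> \tr A = (\rank A)%:R.
Proof.
move=> AA.
have RC : row_base A *m col_base A = 1%:M.
  apply: (row_full_inj (col_base_full A)).
  apply: (row_free_inj (row_base_free A)).
  have := AA; rewrite -{1 2 3}(mulmx_base A) !mulmxA => ->.
  by rewrite /= mulmx1.
by rewrite -{1}(mulmx_base A) mxtrace_mulC RC mxtrace1.
Qed.

Theorem mainTheorem3 (S : {pred algC}) (n m k : nat) (P : 'I_n -> 'M[algC]_k) :
  subring_closed S ->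
  {subset S <= Aint} ->
  (forall i, is_orth_proj m (P i)) ->
  tight_fusion_frame P ->
  equichordal P ->
  (forall i (a b : 'I_k), k%:R * P i a b \in S) ->
  ((k%:R * m%:R * (m%:R * n%:R - k%:R)) / (n%:R - 1) : algC) \in Num.int.
Proof.
move=> Ssub SA hP [A [A0 sumP]] [c hc] hS.
case: n P hP sumP hc hS => [|[|n]] P hP sumP hc hS.
- rewrite (_ : _ / _ = ((k * m * k)%N)%:R); first exact: rpred_nat.
  rewrite !natrM mulr0 !sub0r invrN1; ring.
- by rewrite subrr invr0 mulr0 rpred0.
have trP i : \tr (P i) = m%:R.
  by case: (hP i) => PP [_ rk]; rewrite tr_idem // rk.
have h1 : (1 < n.+2)%N by [].
pose i0 : 'I_n.+2 := ord0.
pose j0 : 'I_n.+2 := Ordinal h1.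
have ij : i0 != j0 by [].
have e2 : (n.+2)%:R * m%:R = A * k%:R.
  have := congr1 mxtrace sumP.
  rewrite mxtrace_scalar raddf_sum /= (eq_bigr _ (fun i _ => trP i)) sumr_const card_ord.
  by move=> H; rewrite mulr_natl mulr_natr H.
have e1 : m%:R + (n.+1)%:R * c = A * m%:R.
  have := congr1 (fun M => \tr (P i0 *m M)) sumP.
  rewrite /= mul_mx_scalar mxtraceZ trP mulmx_sumr raddf_sum /= (bigD1 i0) //=.
  case: (hP i0) => PP _; rewrite PP trP.
  rewrite (eq_bigr (fun _ => c)); last by move=> j ji; rewrite hc // eq_sym.
  rewrite sumr_const cardC1 card_ord /= => <-.
  by rewrite mulr_natl.
set X := \tr ((k%:R *: P i0) *m (k%:R *: P j0)).
have XS : X \in S.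
  have [S1 SB SM] := Ssub.
  have S0 : 0 \in S by rewrite -(subrr 1); apply: SB.
  have SD x y : x \in S -> y \in S -> x + y \in S.
    move=> xS yS; have -> : x + y = x - (0 - y) by rewrite sub0r opprK.
    by rewrite SB // SB.
  rewrite /X /mxtrace; apply: (big_ind (fun x => x \in S)) => // a _.
  rewrite mxE; apply: (big_ind (fun x => x \in S)) => // b _.
  by rewrite !mxE; apply: SM; apply: hS.
have Xc : X = k%:R ^+ 2 * c.
  by rewrite /X -scalemxAl -scalemxAr !mxtraceZ hc // mulrA expr2.
have n1E : (n.+2)%:R - 1 = (n.+1)%:R :> algC.
  by rewrite [in LHS]mulrS addrC addrK.
have nz : (n.+1)%:R != 0 :> algC by rewrite pnatr_eq0.
have e1' : (n.+1)%:R * c = A * m%:R - m%:R by rewrite -e1 addrAC subrr add0r.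
rewrite n1E.
have EX : k%:R * m%:R * (m%:R * (n.+2)%:R - k%:R) / (n.+1)%:R = X.
  rewrite Xc -[RHS](mulfK nz); congr (_ / _).
  transitivity (k%:R ^+ 2 * ((n.+1)%:R * c) : algC); last by ring.
  rewrite e1'.
  transitivity (k%:R * m%:R * ((n.+2)%:R * m%:R - k%:R) : algC); first by ring.
  rewrite e2; ring.
have EC : k%:R * m%:R * (m%:R * (n.+2)%:R - k%:R) / (n.+1)%:R \in Crat.
  by rewrite rpred_div ?rpredM ?rpredB ?rpredM ?rpred_nat.
apply: Cint_rat_Aint; first exact: EC.
by rewrite EX; apply: SA.
Qed.
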